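(* Let $K$ be a field, $\nu$ a valuation on $K[x]$, and $\mathbf{Q}\subseteq K[x]$ a set of monic nonconstant polynomials such that: (1) $\nu_Q$ is a valuation on $K[x]$ for every $Q\in\mathbf{Q}$; (2) for every finite nonempty subset $\mathcal F\subseteq\mathbf{Q}$ there exists $Q'\in\mathcal F$ with $\nu_{Q'}(Q)=\nu(Q)$ for every $Q\in\mathcal F$; (3) $\mathbf{Q}$ satisfies (GS1$^*$). Then $\mathbf{Q}$ is a complete set for $\nu$.
   Context: $\nu:K[x]\to\Gamma\cup\{\infty\}$ is a valuation ($\Gamma$ an ordered abelian group) with $\nu(f)=\infty$ only for $f=0$. For monic nonconstant $Q$, the $Q$-expansion of $f$ is the unique expression $f=f_0+f_1Q+\dots+f_nQ^n$ with each $f_i=0$ or $\deg f_i<\deg Q$, and $\nu_Q(f)=\min_i\nu(f_iQ^i)$. A set $\mathbf{Q}$ of monic nonconstant polynomials is complete for $\nu$ if for every nonconstant $f\in K[x]$ there is $Q\in\mathbf{Q}$ with $\deg Q\le\deg f$ and $\nu_Q(f)=\nu(f)$. For finitely supported $\lambda:\mathbf{Q}\to\mathbb{N}_0$ let $\mathbf{Q}^\lambda=\prod_{\lambda(Q)\neq0}Q^{\lambda(Q)}$. (GS1$^*$): for every $f\in K[x]$ there exist $r\ge0$, $a_1,\dots,a_r\in K$ and finitely supported $\lambda_1,\dots,\lambda_r:\mathbf{Q}\to\mathbb{N}_0$ with $f=\sum_{i=1}^ra_i\mathbf{Q}^{\lambda_i}$, $\nu(a_i\mathbf{Q}^{\lambda_i})\ge\nu(f)$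 for all $i$, and $\deg Q\le\deg f$ whenever $\lambda_i(Q)\ne0$ for some $i$. *)

(* Defs.v *)
From HB Require Import structures.
From mathcomp Require Import all_boot all_order all_algebra.
Set Implicit Arguments. Unset Strict Implicit. Unset Printing Implicit Defensive.
Import Order.TTheory GRing.Theory Num.Theory.
Local Open Scope ring_scope.

Definition ordered_abelian_group (G : zmodType) (le : rel G) : Prop :=
  [/\ reflexive le, transitive le, antisymmetric le, total le &
      forall a b c : G, le a b -> le (a + c) (b + c)].

(* Gamma \cup {oo} is represented as option G, with None = oo. *)
Definition ole (G : zmodType) (le : rel G) (x y : option G) : bool :=
  match x, y with
  | _, None => true
  | None, Some _ => false
  | Some a, Some b => le a b
  end.

Definition oadd (G : zmodType) (x y : option G) : option G :=
  match x, y with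
  | Some a, Some b => Some (a + b)
  | _, _ => None
  end.

Definition omin (G : zmodType) (le : rel G) (x y : option G) : option G :=
  if ole le x y then x else y.

Definition is_valuation (K : fieldType) (G : zmodType) (le : rel G)
    (nu : {poly K} -> option G) : Prop :=
  [/\ forall f, nu f = None <-> f = 0,
      forall f g, nu (f * g) = oadd (nu f) (nu g) &
      forall f g, ole le (omin le (nu f) (nu g)) (nu (f + g))].

(* The i-th coefficient f_i of the Q-expansion f = sum_i f_i Q^i
   (deg f_i < deg Q), computed by Euclidean division. *)
Definition qcoef (K : fieldType) (Q f : {poly K}) (i : nat) : {poly K} :=
  (f %/ Q ^+ i) %% Q.

(* nu_Q(f) = min_i nu(f_i Q^i); for nonconstant Q all f_i with i >= size f
   vanish, so the minimum is taken over i < size f (empty min = oo). *)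
Definition nuQ (K : fieldType) (G : zmodType) (le : rel G)
    (nu : {poly K} -> option G) (Q f : {poly K}) : option G :=
  \big[omin le/None]_(i < size f) nu (qcoef Q f i * Q ^+ i).

Definition monic_nonconstant (K : fieldType) (Q : {poly K}) : Prop :=
  Q \is monic /\ (1 < size Q)%N.

Definition complete_set (K : fieldType) (G : zmodType) (le : rel G)
    (nu : {poly K} -> option G) (QQ : {poly K} -> Prop) : Prop :=
  forall f : {poly K}, (1 < size f)%N ->
    exists Q, [/\ QQ Q, (size Q <= size f)%N & nuQ le nu Q f = nu f].

(* Property GS1-star: a finitely supported lambda : QQ -> N is represented by a finite
   multiset (seq) of elements of QQ, and Q^lambda by the product over it. *)
Definition GS1star (K : fieldType) (G : zmodType) (le : rel G)
    (nu : {poly K} -> option G) (QQ : {poly K} -> Prop) : Prop :=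
  forall f : {poly K},
    exists ts : seq (K * seq {poly K}),
      [/\ f = \sum_(t <- ts) t.1%:P * \prod_(Q <- t.2) Q,
          forall t, t \in ts -> ole le (nu f) (nu (t.1%:P * \prod_(Q <- t.2) Q)) &
          forall t Q, t \in ts -> Q \in t.2 -> QQ Q /\ (size Q <= size f)%N].

(* Main.v *)
Require Import Defs.
From HB Require Import structures.
From mathcomp Require Import all_boot all_order all_algebra.
Import Order.TTheory GRing.Theory Num.Theory.
Local Open Scope ring_scope.

Section Aux.
Variables (G : zmodType) (le : rel G).
Hypothesis (hr : reflexive le) (ht : transitive le) (ha : antisymmetric le) (hto : total le).

Lemma ole_refl x : ole le x x.
Proof. by case: x => //= a; apply: hr. Qed.

Lemma ole_trans x y z : ole le x y -> ole le y z -> ole le x z.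
Proof.
case: x => [a|]; case: y => [b|]; case: z => [c|] //=; exact: ht.
Qed.

Lemma ole_anti x y : ole le x y -> ole le y x -> x = y.
Proof.
case: x => [a|]; case: y => [b|] //= h1 h2; congr Some; apply: ha; by rewrite h1 h2.
Qed.

Lemma ole_total x y : ole le x y || ole le y x.
Proof. case: x => [a|]; case: y => [b|] //=; exact: hto. Qed.

Lemma omin_l x y : ole le (omin le x y) x.
Proof.
rewrite /omin; case: ifP => h; first exact: ole_refl.
by have := ole_total x y; rewrite h.
Qed.

Lemma omin_r x y : ole le (omin le x y) y.
Proof. rewrite /omin; case: ifP => h //; exact: ole_refl. Qed.

Lemma omin_glb z x y : ole le z x -> ole le z y -> ole le z (omin le x y).
Proof. by rewrite /omin; case: ifP. Qed.

Lemma bigmin_le (I : eqType) (s : seq I) (F : I -> option G) j :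
  j \in s -> ole le (\big[omin le/None]_(i <- s) F i) (F j).
Proof.
elim: s => //= a s IH; rewrite inE big_cons => /orP [/eqP -> | js].
  exact: omin_l.
exact: ole_trans (omin_r _ _) (IH js).
Qed.

Variables (K : fieldType) (w : {poly K} -> option G).
Hypothesis (hw : is_valuation le w).

Lemma val_sum (I : eqType) (s : seq I) (g : I -> {poly K}) x :
  (forall i, i \in s -> ole le x (w (g i))) -> ole le x (w (\sum_(i <- s) g i)).
Proof.
case: hw => h0 _ hadd.
elim: s => [|a s IH] H; first by rewrite big_nil (proj2 (h0 0) erefl); clear H; case: x.
rewrite big_cons; apply: ole_trans (hadd _ _).
apply: omin_glb; first by apply: H; rewrite inE eqxx.
by apply: IH => i hi; apply: H; rewrite inE hi orbT.
Qed.

Lemma bigmin_ge (I : eqType) (s : seq I) (F : I -> option G) x :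
  (forall j, j \in s -> ole le x (F j)) -> ole le x (\big[omin le/None]_(i <- s) F i).
Proof.
elim: s => [|a s IH] H; first by rewrite big_nil; clear H; case: x.
rewrite big_cons; apply: omin_glb; first by apply: H; rewrite inE eqxx.
by apply: IH => j hj; apply: H; rewrite inE hj orbT.
Qed.

Lemma nuQ_const (nu : {poly K} -> option G) (Q p : {poly K}) :
  (1 < size Q)%N -> (size p <= 1)%N -> nu 0 = None -> nuQ le nu Q p = nu p.
Proof.
move=> hQ hp h0; rewrite /nuQ.
have hF i : nu (qcoef Q p i * Q ^+ i) = if i == 0%N then nu p else None.
  case: i => [|i] /=.
    by rewrite /qcoef expr0 divp1 mulr1 modp_small //; apply: leq_ltn_trans hQ.
  rewrite /qcoef divp_small ?mod0p ?mul0r //.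
  apply: leq_ltn_trans hp _.
  have Q0 : Q != 0 by rewrite -size_poly_gt0; apply: ltn_trans hQ.
  have : (size (Q ^+ i.+1)).-1 = ((size Q).-1 * i.+1)%N by apply: size_exp.
  have : size (Q ^+ i.+1) != 0%N by rewrite size_poly_eq0 expf_neq0.
  move: (size (Q ^+ i.+1)) => m; case: m => // m _ /= ->.
  rewrite ltnS muln_gt0 /=; by case: (size Q) hQ => // [[]].
case hs: (size p) hp => [|[|//]] _.
  by rewrite big_ord0; move/eqP: hs; rewrite size_poly_eq0 => /eqP ->.
have i0 : forall i : 'I_1, (i : nat) = 0%N by case=> [[]].
apply: ole_anti.
  have := @bigmin_le _ (index_enum 'I_1)
    (fun i : 'I_1 => nu (qcoef Q p i * Q ^+ i)) ord0 (mem_index_enum _).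
  by rewrite hF /=.
by apply: bigmin_ge => j _; rewrite hF i0 /=; apply: ole_refl.
Qed.

End Aux.
Arguments val_sum {G le} ht {K w} hw {I s g x}.
Arguments bigmin_le {G le} hr ht hto {I s F j}.
Arguments ole_anti {G le} ha {x y}.
Arguments nuQ_const {G le} hr ht ha hto {K nu Q p}.

Lemma qexp_gen (K : fieldType) (Q f : {poly K}) n :
  f = \sum_(i < n) qcoef Q f i * Q ^+ i + (f %/ Q ^+ n) * Q ^+ n.
Proof.
elim: n => [|n IH]; first by rewrite big_ord0 add0r expr0 divp1 mulr1.
rewrite big_ord_recr /= -addrA; rewrite {1}IH; congr (_ + _).
rewrite /qcoef exprSr -divp_divl.
rewrite {1}(divp_eq (f %/ Q ^+ n) Q).
by rewrite mulrDl addrC -mulrA (mulrC Q).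
Qed.

Lemma qexp (K : fieldType) (Q f : {poly K}) : (1 < size Q)%N ->
  f = \sum_(i < size f) qcoef Q f i * Q ^+ i.
Proof.
move=> hQ; rewrite {1}(@qexp_gen _ Q f (size f)).
rewrite divp_small ?mul0r ?addr0 //.
have Q0 : Q != 0 by rewrite -size_poly_gt0; apply: ltn_trans hQ.
have : (size (Q ^+ size f)).-1 = ((size Q).-1 * size f)%N by apply: size_exp.
have : size (Q ^+ size f) != 0%N by rewrite size_poly_eq0 expf_neq0.
move: (size (Q ^+ size f)) => m; case: m => // m _ /= ->.
rewrite ltnS; apply: leq_pmull; by case: (size Q) hQ => // [[]].
Qed.

Theorem proposition5p3 (K : fieldType) (G : zmodType) (le : rel G)
    (nu : {poly K} -> option G) (QQ : {poly K} -> Prop) :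
  ordered_abelian_group le ->
  is_valuation le nu ->
  (forall Q, QQ Q -> monic_nonconstant Q) ->
  (forall Q, QQ Q -> is_valuation le (nuQ le nu Q)) ->
  (forall F : seq {poly K}, F != [::] -> (forall Q, Q \in F -> QQ Q) ->
     exists2 Q', Q' \in F & forall Q, Q \in F -> nuQ le nu Q' Q = nu Q) ->
  GS1star le nu QQ ->
  complete_set le nu QQ.
Proof.
move=> [hr ht ha hto _] hnu hmon hval hfin hgs f hf.
have [ts [fE hge hQ]] := hgs f.
set F := flatten (map snd ts).
have inF Q : Q \in F -> exists2 t, t \in ts & Q \in t.2.
  by move/flattenP => [s /mapP [t tin ->] qin]; exists t.
have FQQ Q : Q \in F -> QQ Q /\ (size Q <= size f)%N.
  by move=> /inF [t tin qin]; exact: (hQ t Q tin qin).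
have Fn0 : F != [::].
  apply/eqP => F0; move: hf; rewrite fE.
  have -> : \sum_(t <- ts) t.1%:P * \prod_(Q <- t.2) Q = (\sum_(t <- ts) t.1)%:P.
    rewrite rmorph_sum; apply: eq_big_seq => t tin.
    case: t tin => a [|q s] tin; first by rewrite big_nil mulr1.
    have : q \in F by apply/flattenP; exists (q :: s); [apply/mapP; exists (a, q :: s)|rewrite inE eqxx].
    by rewrite F0.
  by rewrite size_polyC; case: (_ != 0).
have [Q' Q'in HQ'] := hfin F Fn0 (fun Q h => (FQQ Q h).1).
have [QQ' szQ'] := FQQ Q' Q'in.
have [_ hQ'] := hmon Q' QQ'.
exists Q'; split => //.
have hw := hval Q' QQ'.
have nu0 : nu 0 = None by case: hnu => h _ _; apply/(h 0).
have wc (p : {poly K}) : (size p <= 1)%N -> nuQ le nu Q' p = nu p by move=> hp; apply: (nuQ_const hr ht ha hto).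
apply: (ole_anti ha).
-
  rewrite {2}(@qexp _ Q' f hQ').
  apply: (val_sum ht hnu) => i _.
  apply: (bigmin_le hr ht hto); exact: mem_index_enum.
- rewrite fE; apply: (val_sum ht hw) => t tin.
  have -> : nuQ le nu Q' (t.1%:P * \prod_(Q <- t.2) Q) = nu (t.1%:P * \prod_(Q <- t.2) Q).
    case: hw => _ wm _; case: hnu => _ nm _.
    rewrite wm nm wc ?size_polyC ?leq_b1 //; congr oadd.
    have : forall Q, Q \in t.2 -> Q \in F.
      by move=> Q qin; apply/flattenP; exists t.2 => //; apply/mapP; exists t.
    elim: t.2 => [|q s IH] sub; first by rewrite !big_nil wc ?size_poly1.
    rewrite !big_cons wm nm IH; last by move=> Q h; apply: sub; rewrite inE h orbT.
    by rewrite HQ' // sub // inE eqxx.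
  rewrite -fE; exact: hge.
Qed.
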